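(* Let $P\subset V$ be a rational polyhedron invariant under translations by elements of a rational linear subspace $L_0$, and let $\sigma\in\Lambda_{\mathbb{Q}}$. Let $p=p(k,\lambda)$ be a quasi-polynomial function on $\mathbb{Z}\oplus\Lambda$ that is polynomial in $\lambda$, let $g\in\Lambda^\wedge_{\mathbb{Q}}$ and set $q(k,\lambda)=g^\lambda p(k,\lambda)$. If the restriction of $g$ to $\Lambda\cap L_0$ is a non-constant character, then $m=q[C_{P,\sigma}]$ satisfies $\mathcal{A}(m)=0$.
   Context: $V$ finite-dimensional real vector space, $\Lambda\subset V$ full-rank lattice, $\Lambda_{\mathbb{Q}}=\Lambda\otimes\mathbb{Q}$; a linear subspace $L_0$ is rational if $L_0\cap\Lambda$ has full rank in $L_0$. Rational polyhedron: finite intersection of half-spaces $\{v:\langle a,v\rangle\ge c\}$, $a\in\mathrm{Hom}(\Lambda,\mathbb{Z})\otimes\mathbb{Q}$, $c\in\mathbb{Q}$. $C_{P,\sigma}=\{(t,tv+\sigma):t>0,v\in P\}$, $[C_{P,\sigma}]$ its indicator on $\mathbb{Z}\oplus\Lambda$. Quasi-polynomials: algebra generated by polynomials and periodic functions on the lattice. $\Lambda^\wedge_{\mathbb{Q}}$: finite-order elements of $\mathrm{Hom}(\Lambda,U(1))$, $g^\lambda=g(\lambda)$. For such $m$, $\Theta(m;k)=\sum_\lambda m(k,\lambda)\delta_{\lambda/k}$ ($k\in\mathbb{Z}_{>0}$), and $\mathcal{A}(m)$ is its asymptotic expansion as $k\to\infty$ (locally, in powers of $k^{-1}$, coefficients periodic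 in $k$); $\mathcal{A}(m)=0$ means all coefficients vanish, equivalently $\langle\Theta(m;k),\varphi\rangle=o(k^{-N})$ for all $\varphi\in C^\infty_c(V)$ and all $N$. *)

(* Defs.v *)
From HB Require Import structures.
From mathcomp Require Import all_boot all_order all_algebra.
From mathcomp Require Import all_classical all_reals all_analysis.
From mathcomp Require Import complex.
Set Implicit Arguments. Unset Strict Implicit. Unset Printing Implicit Defensive.
Import Order.TTheory GRing.Theory Num.Theory.
Import numFieldNormedType.Exports.
Local Open Scope classical_set_scope.
Local Open Scope ring_scope.

Section Defs.
Variables (R : realType) (n : nat).
Local Notation V := 'rV[R]_n.
Local Notation Lam := 'rV[int]_n.
Local Notation C := (complex R).

Definition latv (l : Lam) : V := map_mx (fun z : int => z%:~R) l.

Definition Cof (x : R) : C := Complex x 0.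

Definition lin_subspace (L0 : set V) : Prop :=
  L0 0 /\ (forall u v, L0 u -> L0 v -> L0 (u + v)) /\
  (forall (a : R) v, L0 v -> L0 (a *: v)).

(* rational: L0 /\ Lambda has full rank in L0, i.e. spans L0 *)
Definition rational_subspace (L0 : set V) : Prop :=
  lin_subspace L0 /\
  exists (d : nat) (B : 'I_d -> Lam),
    (forall i, L0 (latv (B i))) /\
    forall v, L0 v -> exists c : 'I_d -> R, v = \sum_(i < d) c i *: latv (B i).

(* rational polyhedron: finite intersection of half-spaces <a,v> >= c,
   a in Hom(Lambda,Z) (x) Q = rational covectors, c rational *)
Definition rational_polyhedron (P : set V) : Prop :=
  exists (m : nat) (A : 'I_m -> 'rV[rat]_n) (c : 'I_m -> rat),
    P = [set v : V | forall i, ratr (c i) <= \sum_(j < n) ratr (A i 0 j) * v 0 j].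

(* indicator of C_{P,sigma} = {(t, t v + sigma) : t > 0, v in P} on Z (+) Lambda *)
Definition cone_ind (P : set V) (sigma : 'rV[rat]_n) (k : int) (l : Lam) : C :=
  if `[< exists (t : R) (v : V), 0 < t /\ P v /\
          (k%:~R = t) /\ latv l = t *: v + map_mx (fun q : rat => ratr q) sigma >]
  then 1 else 0.

(* periodic functions on the lattice Z (+) Lambda: invariant under a
   finite-index sublattice (equivalently under d(Z (+) Lambda), d > 0) *)
Definition periodic (f : int -> Lam -> C) : Prop :=
  exists d : nat, (0 < d)%N /\
    forall (k k' : int) (l mu : Lam), f (k + d%:Z * k') (l + d%:Z *: mu) = f k l.

Definition lmono (beta : 'rV[nat]_n) (l : Lam) : C :=
  \prod_(j < n) ((l 0 j)%:~R) ^+ (beta 0 j).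

(* quasi-polynomials on Z (+) Lambda: the algebra generated by polynomials and
   periodic functions, i.e. finite sums of (periodic) * (monomial) *)
Definition quasi_poly (p : int -> Lam -> C) : Prop :=
  exists (N : nat) (c : 'I_N -> int -> Lam -> C) (a : 'I_N -> nat)
         (beta : 'I_N -> 'rV[nat]_n),
    (forall i, periodic (c i)) /\
    forall k l, p k l = \sum_(i < N) c i k l * (k%:~R) ^+ (a i) * lmono (beta i) l.

Definition poly_in_lambda (p : int -> Lam -> C) : Prop :=
  forall k, exists (N : nat) (c : 'I_N -> C) (beta : 'I_N -> 'rV[nat]_n),
    forall l, p k l = \sum_(i < N) c i * lmono (beta i) l.

(* Lambda^_Q : finite-order elements of Hom(Lambda, U(1)) *)
Definition fin_order_char (g : Lam -> C) : Prop :=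
  (forall l mu, g (l + mu) = g l * g mu) /\
  (forall l, Normc.normc (g l) = 1) /\
  exists N : nat, (0 < N)%N /\ forall l, g l ^+ N = 1.

Fixpoint iter_deriv (vs : seq V) (f : V -> R) : V -> R :=
  match vs with
  | [::] => f
  | v :: vs' => fun x => derive (iter_deriv vs' f) x v
  end.

Definition test_function (phi : V -> R) : Prop :=
  (forall (vs : seq V), continuous (iter_deriv vs phi)) /\
  (forall (vs : seq V) (v x : V), derivable (iter_deriv vs phi) x v) /\
  compact (closure [set x | phi x != 0]).

Definition Theta_pair (m : int -> Lam -> C) (k : nat) (phi : V -> R) : C :=
  \sum_(l \in [set: Lam]) m k%:Z l * Cof (phi ((k%:R)^-1 *: latv l)).

(* A(m) = 0 : <Theta(m;k),phi> = o(k^-N) as k -> oo, for all phi and N *)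
Definition asymp_zero (m : int -> Lam -> C) : Prop :=
  forall phi : V -> R, test_function phi -> forall N : nat,
    forall eps : R, 0 < eps -> exists K : nat, forall k : nat, (K <= k)%N ->
      Normc.normc (Theta_pair m k phi) <= eps * ((k%:R) ^- N).

End Defs.

Arguments latv {R n} l.
Arguments Cof {R} x.

(* Main.v *)
Require Import Defs.
From HB Require Import structures.
From mathcomp Require Import all_boot all_order all_algebra.
From mathcomp Require Import all_classical all_reals all_analysis.
From mathcomp Require Import complex.
From mathcomp Require Import ring lra zify.
From mathcomp Require Import finmap.
Set Implicit Arguments. Unset Strict Implicit. Unset Printing Implicit Defensive.
Import Order.TTheory GRing.Theory Num.Theory.
Import numFieldNormedType.Exports.
Local Open Scope classical_set_scope.
Local Open Scope ring_scope.

Section Diff.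
Variable R : realType.
Local Notation C := (complex R).
Local Notation nc := (@Normc.normc R).

Lemma nc_ge0 (z : C) : 0 <= nc z.
Proof. by case: z => a b /=; rewrite sqrtr_ge0. Qed.

Lemma nc_add (x y : C) : nc (x + y) <= nc x + nc y.
Proof. exact: (@le_normcD R x y). Qed.

Lemma nc_mul (x y : C) : nc (x * y) = nc x * nc y.
Proof. exact: Normc.normcM. Qed.

Lemma nc_opp (x : C) : nc (- x) = nc x.
Proof. exact: (@normcN R x). Qed.

Lemma nc_sub (x y : C) : nc (x - y) <= nc x + nc y.
Proof. by rewrite -(nc_opp y); apply: nc_add. Qed.

Lemma nc0 : nc 0 = 0. Proof. exact: Normc.normc0. Qed.
Lemma nc1 : nc 1 = 1. Proof. exact: Normc.normc1. Qed.

Lemma nc_eq0 (z : C) : (nc z == 0) = (z == 0).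
Proof.
apply/eqP/eqP => [/Normc.eq0_normc //|->]; exact: nc0.
Qed.

Lemma nc_sum (I : Type) (r : seq I) (P : pred I) (F : I -> C) :
  nc (\sum_(i <- r | P i) F i) <= \sum_(i <- r | P i) nc (F i).
Proof.
apply: (big_ind2 (fun x y => nc x <= y)); first by rewrite nc0.
  by move=> x1 x2 y1 y2 h1 h2; apply: le_trans (nc_add _ _) (lerD h1 h2).
by [].
Qed.

Lemma nc_prod (I : Type) (r : seq I) (P : pred I) (F : I -> C) :
  nc (\prod_(i <- r | P i) F i) = \prod_(i <- r | P i) nc (F i).
Proof.
apply: (big_morph nc); [exact: nc_mul | exact: nc1].
Qed.

Lemma nc_exp (x : C) m : nc (x ^+ m) = nc x ^+ m.
Proof.
elim: m => [|m ih]; first by rewrite !expr0 nc1.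
by rewrite !exprS nc_mul ih.
Qed.

Lemma nc_Cof (x : R) : nc (Cof x) = `|x|.
Proof. by rewrite /Cof /= expr0n /= addr0 sqrtr_sqr. Qed.

Lemma Cof_sub (x y : R) : Cof (x - y) = Cof x - Cof y.
Proof. by rewrite /Cof; apply/eqP; rewrite eq_complex /= subr0 !eqxx. Qed.

Lemma nc_int (z : int) : nc (z%:~R : C) = (`|z|%:~R : R).
Proof.
have -> : (z%:~R : C) = Cof (z%:~R) by rewrite -(rmorph_int (real_complex R)).
by rewrite nc_Cof -intr_norm.
Qed.

Definition dif (u : nat -> C) : nat -> C := fun j => u j.+1 - u j.
Definition difn (M : nat) (u : nat -> C) := iter M dif u.

Lemma difnS M u : difn M.+1 u = dif (difn M u). Proof. by []. Qed.
Lemma difnSr M u : difn M.+1 u = difn M (dif u).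
Proof. by rewrite /difn iterSr. Qed.

Lemma difn_ext M u v : (forall j, u j = v j) -> forall j, difn M u j = difn M v j.
Proof. by move=> /funext ->. Qed.

Lemma difn_shift M u a j : difn M (fun i => u (i + a)%N) j = difn M u (j + a)%N.
Proof.
elim: M j => [|M ih] j //=.
by rewrite /dif ih ih addSn.
Qed.

Lemma difn_add M u v j : difn M (fun i => u i + v i) j = difn M u j + difn M v j.
Proof.
elim: M j => [|M ih] j //=.
by rewrite /dif !ih addrACA opprD.
Qed.

Lemma difn_scale M c u j : difn M (fun i => c * u i) j = c * difn M u j.
Proof.
elim: M j => [|M ih] j //=.
by rewrite /dif !ih mulrBr.
Qed.

Lemma difn_zero M j : difn M (fun _ => 0) j = 0.
Proof.
elim: M j => [|M ih] j //=.
by rewrite /dif !ih subrr.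
Qed.

Lemma difn_add_iter M N u j : difn (M + N) u j = difn M (difn N u) j.
Proof. by rewrite /difn iterD. Qed.

Lemma dif_mul u v : dif (fun j => u j * v j) = (fun j => u j.+1 * dif v j + dif u j * v j).
Proof.
apply/funext => j; rewrite /dif.
by rewrite mulrBr mulrBl addrA subrK.
Qed.

Definition Pd (a : nat) (u : nat -> C) := forall j, difn a.+1 u j = 0.

Lemma Pd_ext a u v : (forall j, u j = v j) -> Pd a v -> Pd a u.
Proof. by move=> /funext ->. Qed.

Lemma Pd_high a u : Pd a u -> forall i j, (a < i)%N -> difn i u j = 0.
Proof.
move=> h i j ai.
have -> : i = ((i - a.+1) + a.+1)%N by rewrite subnK.
rewrite difn_add_iter.
rewrite (difn_ext _ (v := fun _ => 0)) ?difn_zero //.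
Qed.

Lemma Pd_mono a b u : (a <= b)%N -> Pd a u -> Pd b u.
Proof. by move=> ab h j; apply: Pd_high h _ _ _; rewrite ltnS. Qed.

Lemma Pd_mul_aux M : forall a b u v, Pd a u -> Pd b v -> (a + b < M)%N ->
  forall j, difn M (fun j => u j * v j) j = 0.
Proof.
elim: M => [|M ih] a b u v hu hv hab j; first by [].
rewrite difnSr dif_mul difn_add.
have z1 : difn M (fun j => u j.+1 * dif v j) j = 0.
  case: b hv hab => [|b] hv hab.
    rewrite (difn_ext _ (v := fun _ => 0)) ?difn_zero // => i.
    by have := hv i; rewrite /= => ->; rewrite mulr0.
  apply: (ih a b (fun j => u j.+1) (dif v)) => //; last by move: hab; rewrite addnS ltnS.
  move=> i.
  rewrite (@difn_ext _ _ (fun i => u (i + 1)%N)); last by move=> k; rewrite addn1.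
  by rewrite difn_shift; apply: hu.
  by move=> i; rewrite -difnSr; apply: hv.
have z2 : difn M (fun j => dif u j * v j) j = 0.
  case: a hu hab => [|a] hu hab.
    rewrite (difn_ext _ (v := fun _ => 0)) ?difn_zero // => i.
    by have := hu i; rewrite /= => ->; rewrite mul0r.
  apply: (ih a b (dif u) v).
  - by move=> i; rewrite -difnSr; apply: hu.
  - exact: hv.
  - by move: hab; rewrite addSn ltnS.
by rewrite z1 z2 addr0.
Qed.

Lemma Pd_mul a b u v : Pd a u -> Pd b v -> Pd (a + b) (fun j => u j * v j).
Proof. by move=> hu hv j; apply: (Pd_mul_aux hu hv). Qed.

Lemma Pd_const c : Pd 0 (fun _ => c).
Proof. by move=> j; rewrite /= /dif subrr. Qed.

Lemma Pd_add a u v : Pd a u -> Pd a v -> Pd a (fun j => u j + v j).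
Proof. by move=> hu hv j; rewrite difn_add hu hv addr0. Qed.

Lemma Pd_scale a c u : Pd a u -> Pd a (fun j => c * u j).
Proof. by move=> hu j; rewrite difn_scale hu mulr0. Qed.

Lemma Pd_lin (x y : C) : Pd 1 (fun j => x + y * j%:R).
Proof.
move=> j; rewrite /= /dif.
by rewrite !mulrS !mulrDr !mulr1 !opprD !addrA; ring.
Qed.

Lemma Pd_exp a u m : Pd a u -> Pd (a * m) (fun j => u j ^+ m).
Proof.
move=> hu; elim: m => [|m ih].
  by move=> j; rewrite muln0 /= /dif !expr0 subrr.
rewrite mulnS.
by apply: (Pd_ext _ (Pd_mul hu ih)) => j; rewrite exprS.
Qed.

Lemma Pd_prod (I : Type) (r : seq I) (d : I -> nat) (u : I -> nat -> C) :
  (forall i, Pd (d i) (u i)) ->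
  Pd (\sum_(i <- r) d i) (fun j => \prod_(i <- r) u i j).
Proof.
move=> hu; elim: r => [|i r ih].
  by move=> j; rewrite big_nil /= /dif !big_nil subrr.
rewrite big_cons; apply: (Pd_ext _ (Pd_mul (hu i) ih)) => j.
by rewrite big_cons.
Qed.

Lemma Pd_sum (I : Type) (r : seq I) a (u : I -> nat -> C) :
  (forall i, Pd a (u i)) -> Pd a (fun j => \sum_(i <- r) u i j).
Proof.
move=> hu; elim: r => [|i r ih].
  by move=> j; rewrite (@difn_ext _ _ (fun _ => 0)) ?difn_zero // => i; rewrite big_nil.
apply: (Pd_ext _ (Pd_add (hu i) ih)) => j.
by rewrite big_cons.
Qed.

End Diff.

Section Bound.
Variable R : realType.
Local Notation C := (complex R).
Local Notation nc := (@Normc.normc R).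

Lemma difn_window (u : nat -> C) (T : nat) (U0 : R) :
  (forall j, (j <= T)%N -> nc (u j) <= U0) ->
  forall i j, (i + j <= T)%N -> nc (difn i u j) <= 2 ^+ i * U0.
Proof.
move=> hu; elim=> [|i ih] j hij; first by rewrite expr0 mul1r; apply: hu.
rewrite difnS /dif; apply: le_trans (nc_sub _ _) _.
rewrite exprS -mulrA mulr2n mulrDl mul1r; apply: lerD; apply: ih.
  by rewrite addnS -addSn.
by apply: leq_trans hij; rewrite leq_add2r.
Qed.

Lemma difn_bound M : forall (D T : nat) (U V e : R) (u v : nat -> C),
  0 <= U -> 0 <= V -> 0 <= e -> e <= 1 ->
  (forall i j, (i + j <= T)%N -> (D < i)%N -> difn i u j = 0) ->
  (forall i j, (i + j <= T)%N -> nc (difn i u j) <= U) ->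
  (forall i j, (i + j <= T)%N -> nc (difn i v j) <= V * e ^+ i) ->
  forall j, (M + j <= T)%N ->
  nc (difn M (fun j => u j * v j) j) <= 2 ^+ M * U * V * e ^+ (M - D).
Proof.
elim: M => [|M ih] D T U V e u v U0 V0 e0 e1 hu0 hu hv j hj.
  rewrite /= nc_mul expr0 mul1r sub0n expr0 mulr1.
  have := hv 0%N j hj; rewrite expr0 mulr1 => h2.
  by apply: ler_pM => //; [exact: nc_ge0|exact: nc_ge0|exact: (hu 0%N j hj)].
case: T hu0 hu hv hj => [|T] hu0 hu hv hj; first by rewrite addSn in hj.
rewrite difnSr dif_mul difn_add.
apply: le_trans (nc_add _ _) _.
have eq2 : 2 ^+ M.+1 * U * V * e ^+ (M.+1 - D) =
   2 ^+ M * U * V * e ^+ (M.+1 - D) + 2 ^+ M * U * V * e ^+ (M.+1 - D).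
  by rewrite exprS; ring.
rewrite eq2; apply: lerD.
- have := ih D T U (V * e) e (fun j => u j.+1) (dif v) U0 (mulr_ge0 V0 e0) e0 e1.
  move=> /(_ _ _ _ j) h.
  apply: le_trans (h _ _ _ _) _.
  + move=> i k hik hDi.
    rewrite (@difn_ext _ _ _ (fun i => u (i + 1)%N)); last by move=> x; rewrite addn1.
    by rewrite difn_shift; apply: hu0 => //; rewrite addn1 addnS.
  + move=> i k hik.
    rewrite (@difn_ext _ _ _ (fun i => u (i + 1)%N)); last by move=> x; rewrite addn1.
    by rewrite difn_shift; apply: hu => //; rewrite addn1 addnS.
  + move=> i k hik; rewrite -difnSr -mulrA -exprS; apply: hv.
    by rewrite addSn.
  + lia.
  + rewrite -!mulrA; apply: ler_wpM2l; first exact: exprn_ge0.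
    apply: ler_wpM2l => //; apply: ler_wpM2l => //.
    rewrite -exprS; apply: ler_wiXn2l => //.
    rewrite /=; lia.
- clear eq2; case: D hu0 hu => [|D] hu0 hu.
  + have := ih 0%N T 0 V e (dif u) v (lexx _) V0 e0 e1.
    move=> /(_ _ _ _ j) h.
    apply: le_trans (h _ _ _ _) _.
    * by move=> i k hik hDi; rewrite -difnSr; apply: hu0 => //; lia.
    * move=> i k hik; rewrite -difnSr (hu0 i.+1 k) ?nc0 //; lia.
    * by move=> i k hik; apply: hv; lia.
    * lia.
    * rewrite mulr0 mul0r mul0r.
      apply: mulr_ge0; [apply: mulr_ge0; [apply: mulr_ge0 => //; exact: exprn_ge0|by []]|exact: exprn_ge0].
  + have := ih D T U V e (dif u) v U0 V0 e0 e1.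
    move=> /(_ _ _ _ j) h.
    rewrite subSS.
    apply: h.
    * by move=> i k hik hDi; rewrite -difnSr; apply: hu0 => //; lia.
    * by move=> i k hik; rewrite -difnSr; apply: hu; lia.
    * by move=> i k hik; apply: hv; lia.
    * lia.
Qed.

End Bound.

Section Anal.
Variable R : realType.

Lemma der_transfer (V1 V2 W : normedModType R) (f : V1 -> W) (g : V2 -> W)
  (a v : V1) (b w : V2) (d : W) :
  (forall h : R, f (h *: v + a) = g (h *: w + b)) ->
  is_derive b w g d -> is_derive a v f d.
Proof.
move=> H [dg vg].
have fa : f a = g b by have := H 0; rewrite !scale0r !add0r.
have E : (fun h : R => h^-1 *: ((f \o shift a) (h *: v) - f a)) =
         (fun h : R => h^-1 *: ((g \o shift b) (h *: w) - g b)).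
  by apply/funext => h /=; rewrite fa H.
apply: DeriveDef.
  by rewrite /derivable E.
by rewrite /derive E.
Qed.

Definition rdif (e : R) (f : R -> R) : R -> R := fun t => f (t + e) - f t.
Definition rdifn (b : nat) (e : R) (f : R -> R) := iter b (rdif e) f.

Lemma rdifn_is_derive (f f' : R -> R) (e : R) :
  (forall t : R, is_derive t (1 : R) f (f' t)) ->
  forall b (t : R), is_derive t (1 : R) (rdifn b e f) (rdifn b e f' t).
Proof.
move=> hf; elim=> [|b ih] t //=.
set G := rdifn b e f; set G' := rdifn b e f'.
have h1 : is_derive t 1 (G \o shift e) (G' (t + e)).
  apply: (@der_transfer _ _ _ _ G _ _ (t + e) 1) => //.
  by move=> h /=; rewrite addrA.
have h2 := is_deriveB h1 (ih t).
have E : rdif e G = (G \o shift e) - G by apply/funext => x.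
by rewrite E.
Qed.

Lemma rdifn_bound (fs : nat -> R -> R) (Bf : nat -> R) (e : R) :
  (forall m (t : R), is_derive t (1 : R) (fs m) (fs m.+1 t)) ->
  (forall m t, `|fs m t| <= Bf m) -> 0 <= e ->
  forall b m t, `|rdifn b e (fs m) t| <= e ^+ b * Bf (m + b)%N.
Proof.
move=> hd hB e0; elim=> [|b ih] m t.
  by rewrite /= expr0 mul1r addn0.
set G := rdifn b e (fs m); set G' := rdifn b e (fs m.+1).
have dG : forall x : R, is_derive x (1 : R) G (G' x).
  by move=> x; apply: rdifn_is_derive.
have te : t <= t + e by rewrite lerDl.
have [c _ hc] := @MVT_segment R G G' t (t + e) te (fun x _ => dG x)
  (derivable_within_continuous (fun x _ => @ex_derive _ _ _ _ _ _ _ (dG x))).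
rewrite /= /rdif -/G hc addrAC subrr add0r normrM (ger0_norm e0).
rewrite exprSr mulrAC; apply: ler_wpM2r => //.
by have := ih m.+1 c; rewrite addSnnS.
Qed.

Variable n : nat.
Local Notation V := 'rV[R]_n.

Lemma iter_deriv_vanish (phi : V -> R) vs x :
  ~ closure [set y | phi y != 0] x -> iter_deriv vs phi x = 0.
Proof.
elim: vs x => [|v vs ih] x hx /=.
  apply/eqP; apply/negPn/negP => nz; apply: hx; exact: subset_closure.
set F := iter_deriv vs phi.
have hU : open (~` closure [set y | phi y != 0]) by apply: closed_openC; exact: closed_closure.
have : nbhs x (~` closure [set y | phi y != 0]).
  by move: hU; rewrite openE => /(_ x hx).
move=> /nbhs_ballP [r r0 hr].
have rp : 0 < r / (`|v| + 1) by apply: divr_gt0 => //; rewrite ltr_wpDl.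
have Hc : (fun k : R => k^-1 *: ((F \o shift x) (k *: v) - F x)) @ 0^' --> (0:R).
  apply: cvg_near_cst.
  near=> k.
  have hh : `|k| < r / (`|v| + 1) by near: k; apply: dnbhs0_lt.
  rewrite /= /F (ih x hx) (ih (k *: v + x)) ?subrr ?scaler0 //.
  apply: hr; rewrite -ball_normE /ball_ /= opprD addrCA subrr addr0 normrN normrZ.
  apply: le_lt_trans (_ : `|k| * (`|v| + 1) < r).
    by rewrite ler_wpM2l // lerDl.
  by rewrite -ltr_pdivlMr // ltr_wpDl.
exact: cvg_lim Hc.
Unshelve. all: by end_near.
Qed.

Lemma iter_deriv_bounded (phi : V -> R) vs :
  test_function phi -> exists B, forall x, `|iter_deriv vs phi x| <= B.
Proof.
move=> [hc [hd hK]].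
set K := closure [set y | phi y != 0].
have [Kn|Ke] := pselect (K !=set0); last first.
  exists 0 => x; rewrite iter_deriv_vanish ?normr0 // => Kx.
  by apply: Ke; exists x.
have cf : {within K, continuous (fun x => `|iter_deriv vs phi x|)}.
  apply: continuous_subspaceT => x.
  apply: continuous_comp; first exact: hc.
  exact: norm_continuous.
have [c Kc hmax] := compact_EVT_max Kn hK cf.
exists (`|iter_deriv vs phi c|) => x.
have [Kx|nKx] := pselect (K x).
  by apply: hmax; apply: mem_set.
by rewrite iter_deriv_vanish // normr0.
Qed.

Lemma line_is_derive (phi : V -> R) (h x0 : V) (m : nat) (t : R) :
  test_function phi ->
  is_derive t (1 : R) (fun t : R => iter_deriv (nseq m h) phi (x0 + t *: h))
     (iter_deriv (nseq m.+1 h) phi (x0 + t *: h)).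
Proof.
move=> [hc [hd hK]].
apply: (@der_transfer _ _ _ _ (iter_deriv (nseq m h) phi) _ _ (x0 + t *: h) h).
  by move=> k /=; rewrite -[k *: 1]/(k * 1) mulr1 scalerDl addrCA.
exact: derivableP.
Qed.

Lemma test_diff_bound (phi : V -> R) (h : V) (M : nat) :
  test_function phi ->
  exists B : R, 0 <= B /\ forall b x0 e t, (b <= M)%N -> 0 <= e ->
    `|rdifn b e (fun t => phi (x0 + t *: h)) t| <= e ^+ b * B.
Proof.
move=> tf.
have /choice [Bf hBf] : forall m, exists B, forall x,
    `|iter_deriv (nseq m h) phi x| <= B.
  by move=> m; apply: iter_deriv_bounded.
exists (\sum_(i < M.+1) `|Bf i|); split.
  by apply: sumr_ge0 => i _.
move=> b x0 e t bM e0.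
pose fs m := fun t : R => iter_deriv (nseq m h) phi (x0 + t *: h).
have := @rdifn_bound fs Bf e (fun m t => @line_is_derive phi h x0 m t tf)
  (fun m t => hBf m _) e0 b 0%N t.
rewrite add0n => H; apply: le_trans H _.
apply: ler_wpM2l; first exact: exprn_ge0.
apply: le_trans (ler_norm _) _.
have := @ler_sum _ _ (index_enum 'I_M.+1) (fun i => true) (fun i => if i == Ordinal (bM : (b < M.+1)%N) then `|Bf i| else 0) (fun i => `|Bf i|).
rewrite -big_mkcond /= big_pred1_eq => /=; apply.
by move=> i _; case: ifP.
Qed.

End Anal.

Section Lat.
Variable R : realType.
Variable n : nat.
Local Notation C := (complex R).
Local Notation Lam := 'rV[int]_n.

Definition DL (s : Lam) (G : Lam -> C) : Lam -> C := fun l => G (l + s) - G l.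
Definition DLn (M : nat) (s : Lam) (G : Lam -> C) := iter M (DL s) G.

Lemma DLn_line M s G l j :
  DLn M s G (l + s *+ j) = difn M (fun i => G (l + s *+ i)) j.
Proof.
elim: M j => [|M ih] j //=.
by rewrite /DL /dif -ih -ih mulrSr addrA.
Qed.

Lemma DLn_supp M s G l : DLn M s G l != 0 ->
  exists2 j, (j <= M)%N & G (l + s *+ j) != 0.
Proof.
elim: M l => [|M ih] l /=.
  by move=> h; exists 0%N => //; rewrite mulr0n addr0.
rewrite /DL => h.
have [h1|h1] := eqVneq (DLn M s G (l + s)) 0.
  move: h; rewrite h1 sub0r oppr_eq0 => /ih [j jM hj].
  by exists j => //; apply: leqW.
have [j jM hj] := ih _ h1; exists j.+1 => //.
by rewrite mulrS addrA.
Qed.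

Definition supp (G : Lam -> C) := [set l | G l != 0].

Lemma fsum_sub (a b : Lam -> C) : finite_set (supp a) -> finite_set (supp b) ->
  \sum_(l \in [set: Lam]) (a l - b l) =
  \sum_(l \in [set: Lam]) a l - \sum_(l \in [set: Lam]) b l.
Proof.
move=> fa fb.
have fab : finite_set (supp a `|` supp b) by rewrite finite_setU.
set A := fset_set (supp a `|` supp b).
have nA : forall i : Lam, i \notin A -> a i = 0 /\ b i = 0.
  move=> i; rewrite in_fset_set // notin_setE /supp /= => /not_orP [].
  by move=> /negP; rewrite negbK => /eqP -> /negP; rewrite negbK => /eqP ->.
rewrite (fsbigTE A); last by move=> i /nA [-> ->]; rewrite subrr.
rewrite (fsbigTE A (fun l => a l)); last by move=> i /nA [].
rewrite (fsbigTE A (fun l => b l)); last by move=> i /nA [].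
by rewrite sumrB.
Qed.

Lemma fsum_shift (H : Lam -> C) s :
  \sum_(l \in [set: Lam]) H (l + s) = \sum_(l \in [set: Lam]) H l.
Proof.
rewrite [RHS](reindex_fsbigT (fun l => l + s)) //.
by exists (fun l => l - s) => x; rewrite ?addrK ?subrK.
Qed.

Lemma supp_shift (G : Lam -> C) s : finite_set (supp G) ->
  finite_set (supp (fun l => G (l + s))).
Proof.
move=> fG; apply: (sub_finite_set (B := (fun l => l - s) @` supp G)).
  by move=> l hl; exists (l + s) => //; rewrite addrK.
exact: finite_image.
Qed.

Lemma supp_mull (f G : Lam -> C) : finite_set (supp G) ->
  finite_set (supp (fun l => f l * G l)).
Proof.
move=> fG; apply: (sub_finite_set (B := supp G)) => // l.
by rewrite /supp /= mulf_eq0 negb_or => /andP [].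
Qed.

Lemma supp_DL (G : Lam -> C) s : finite_set (supp G) -> finite_set (supp (DL s G)).
Proof.
move=> fG; apply: (sub_finite_set (B := supp (fun l => G (l + s)) `|` supp G)).
  move=> l; rewrite /supp /DL /=.
  have [->|h] := eqVneq (G (l + s)) 0; first by rewrite sub0r oppr_eq0 => ?; right.
  by move=> _; left.
by rewrite finite_setU; split => //; apply: supp_shift.
Qed.

Lemma supp_DLn (G : Lam -> C) s M : finite_set (supp G) ->
  finite_set (supp (DLn M s G)).
Proof. by move=> fG; elim: M => [|M ih] //=; apply: supp_DL. Qed.

Variable g : Lam -> C.
Hypothesis gM : forall l mu, g (l + mu) = g l * g mu.

Lemma fsum_DL (G : Lam -> C) s : finite_set (supp G) ->
  \sum_(l \in [set: Lam]) g l * DL s G l =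
  (g (- s) - 1) * \sum_(l \in [set: Lam]) g l * G l.
Proof.
move=> fG.
rewrite (eq_fsbigr (fun l => g l * G (l + s) - g l * G l)); last first.
  by move=> l _; rewrite /DL mulrBr.
rewrite fsum_sub; last first.
- exact: supp_mull.
- by apply: supp_mull; apply: supp_shift.
rewrite mulrBl mul1r; congr (_ - _).
rewrite (eq_fsbigr (fun l => g (l + s - s) * G (l + s))); last first.
  by move=> l _ /=; rewrite addrK.
rewrite (fsum_shift (fun l => g (l - s) * G l) s) mulr_fsumr.
apply: eq_fsbigr => l _; rewrite gM; ring.
Qed.

Lemma fsum_DLn (G : Lam -> C) s M : finite_set (supp G) ->
  \sum_(l \in [set: Lam]) g l * DLn M s G l =
  (g (- s) - 1) ^+ M * \sum_(l \in [set: Lam]) g l * G l.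
Proof.
move=> fG; elim: M => [|M ih]; first by rewrite expr0 mul1r.
rewrite /= fsum_DL; last exact: supp_DLn.
by rewrite -/(DLn M s G) ih exprS mulrA.
Qed.

End Lat.

Section Box.
Variable R : realType.
Variable n : nat.
Local Notation C := (complex R).
Local Notation nc := (@Normc.normc R).
Local Notation Lam := 'rV[int]_n.

Definition inbox (K : nat) (l : Lam) := forall t, `|l 0%R t| <= K%:Z.

Definition boxseq (K : nat) : seq Lam :=
  [seq \row_t ((((f : {ffun 'I_n -> 'I_(K.*2.+1)}) t) : nat)%:Z - K%:Z) | f <- enum {ffun 'I_n -> 'I_(K.*2.+1)}].

Lemma inbox_mem K l : inbox K l -> l \in boxseq K.
Proof.
move=> hl.
pose f : {ffun 'I_n -> 'I_(K.*2.+1)} := [ffun t => inord (absz (l 0%R t + K%:Z))].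
have e t : ((absz (l 0 t + K%:Z)%R)%:Z = l 0 t + K%:Z) /\ (absz (l 0 t + K%:Z)%R < K.*2.+1)%N.
  have := hl t; rewrite ler_norml => /andP [h1 h2].
  have h3 : 0 <= l 0%R t + K%:Z by rewrite -lerBlDr sub0r.
  split; first by rewrite gez0_abs.
  rewrite -ltz_nat gez0_abs //; rewrite -addnn; lia.
apply/mapP; exists f; first by rewrite mem_enum.
apply/rowP => t; rewrite mxE ffunE inordK; last by case: (e t).
by case: (e t) => -> _; rewrite addrK.
Qed.

Lemma inbox_finite K : finite_set [set l | inbox K l].
Proof.
apply: (sub_finite_set (B := [set` boxseq K])); last exact: finite_seq.
by move=> l /= /inbox_mem.
Qed.

Lemma size_boxseq K : size (boxseq K) = (K.*2.+1 ^ n)%N.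
Proof. by rewrite size_map -cardE card_ffun !card_ord. Qed.

Lemma sum_le_size (I : eqType) (r : seq I) (P : pred I) (F : I -> R) (B : R) :
  0 <= B -> (forall i, F i <= B) -> \sum_(i <- r | P i) F i <= (size r)%:R * B.
Proof.
move=> B0 hF; elim: r => [|i r ih]; first by rewrite big_nil mul0r.
rewrite big_cons /= mulrSr mulrDl mul1r; case: (P i).
  by rewrite addrC; apply: lerD.
by apply: le_trans ih _; rewrite lerDl.
Qed.

Lemma fsum_box_bound (H : Lam -> C) K (B : R) :
  0 <= B -> (forall l, ~ inbox K l -> H l = 0) -> (forall l, nc (H l) <= B) ->
  nc (\sum_(l \in [set: Lam]) H l) <= (K.*2.+1 ^ n)%:R * B.
Proof.
move=> B0 hout hB.
rewrite (fsbigE (undup (boxseq K))) //; last first.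
  move=> i _; rewrite mem_undup => hi; apply: hout => /inbox_mem.
  by rewrite (negbTE hi).
  exact: undup_uniq.
apply: le_trans (nc_sum _ _ _) _.
apply: le_trans (sum_le_size _ _ B0 hB) _.
rewrite -size_boxseq; apply: ler_wpM2r => //; rewrite ler_nat.
exact: size_undup.
Qed.

Lemma periodic_bound (c : int -> Lam -> C) : Defs.periodic c ->
  exists B : R, 0 <= B /\ forall k l, nc (c k l) <= B.
Proof.
move=> [d [d0 hc]].
set F := fun x : 'I_d * {ffun 'I_n -> 'I_d} =>
   nc (c ((x.1 : nat)%:Z) (\row_t (((x.2 t) : nat)%:Z))).
exists (\sum_x F x); split; first by apply: sumr_ge0 => x _; apply: nc_ge0.
move=> k l.
have dz : (d%:Z != 0) by rewrite eqz_nat -lt0n.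
have dp : (0 < d%:Z) by rewrite ltz_nat.
have mb z : (0 <= (z %% d%:Z)%Z) /\ (absz (z %% d%:Z)%Z < d)%N.
  have h0 := modz_ge0 z dz.
  split => //; rewrite -ltz_nat gez0_abs //; exact: ltz_pmod.
have ab z : ((absz (z %% d%:Z)%Z)%:Z = (z %% d%:Z)%Z).
  by rewrite gez0_abs //; case: (mb z).
pose x : 'I_d * {ffun 'I_n -> 'I_d} :=
  (Ordinal (proj2 (mb k)), [ffun t => Ordinal (proj2 (mb (l 0%R t)))]).
have E : c k l = c ((x.1 : nat)%:Z) (\row_t (((x.2 t) : nat)%:Z)).
  rewrite /= ab.
  have -> : (\row_t ((([ffun t => Ordinal (proj2 (mb (l 0%R t)))] : {ffun 'I_n -> 'I_d}) t : nat)%:Z) : Lam)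
      = \row_t ((l 0%R t) %% d%:Z)%Z.
    by apply/rowP => t; rewrite !mxE ffunE /= ab.
  rewrite -(hc (k %% d%:Z)%Z (k %/ d%:Z)%Z (\row_t ((l 0%R t) %% d%:Z)%Z) (\row_t ((l 0%R t) %/ d%:Z)%Z)).
  congr (c _ _).
    by rewrite [LHS](divz_eq k d%:Z) addrC mulrC.
  apply/rowP => t; rewrite !mxE.
  by rewrite [LHS](divz_eq (l 0%R t) d%:Z) addrC mulrC.
rewrite E (bigD1 x) //= -/(F x) lerDl.
by apply: sumr_ge0 => y _; apply: nc_ge0.
Qed.

End Box.

Section Poly.
Variable R : realType.
Variable n : nat.
Local Notation C := (complex R).
Local Notation Lam := 'rV[int]_n.

Lemma lmono_line (beta : 'rV[nat]_n) (l s : Lam) j :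
  lmono R beta (l + s *+ j) =
  \prod_(t < n) (((l 0 t)%:~R : C) + (s 0 t)%:~R * j%:R) ^+ (beta 0 t).
Proof.
rewrite /lmono; apply: eq_bigr => t _.
rewrite mxE mulmxnE intrD; congr ((_ + _) ^+ _).
by rewrite -[s 0 t *+ j]mulr_natr intrM natz -pmulrn.

Qed.


Definition Lpoly (l s : Lam) (beta : 'rV[nat]_n) : {poly C} :=
  \prod_(t < n) (((l 0 t)%:~R : C)%:P + ((s 0 t)%:~R : C) *: 'X) ^+ (beta 0 t).

Lemma Lpoly_eval l s beta (x : C) : (Lpoly l s beta).[x] =
  \prod_(t < n) (((l 0 t)%:~R : C) + (s 0 t)%:~R * x) ^+ (beta 0 t).
Proof.
rewrite horner_prod; apply: eq_bigr => t _.
by rewrite horner_exp hornerD hornerC hornerZ hornerX.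
Qed.

Lemma p_line (p : int -> Lam -> C) (Nq : nat) (c : 'I_Nq -> int -> Lam -> C)
  (a : 'I_Nq -> nat) (beta : 'I_Nq -> 'rV[nat]_n) :
  (forall i, Defs.periodic (c i)) ->
  (forall k l, p k l = \sum_(i < Nq) c i k l * (k%:~R) ^+ (a i) * lmono R (beta i) l) ->
  poly_in_lambda p ->
  forall k l s j, p k (l + s *+ j) = \sum_(i < Nq) (c i k l * (k%:~R) ^+ (a i)) *
     \prod_(t < n) (((l 0 t)%:~R : C) + (s 0 t)%:~R * j%:R) ^+ (beta i 0 t).
Proof.
move=> hper hp hpl k l s.
have [N' [c' [beta' hU]]] := hpl k.
pose U := \sum_(i < N') c' i *: Lpoly l s (beta' i).
pose Q := \sum_(i < Nq) (c i k l * (k%:~R) ^+ (a i)) *: Lpoly l s (beta i).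
have Ue j : U.[j%:R] = p k (l + s *+ j).
  rewrite hU horner_sum; apply: eq_bigr => i _.
  by rewrite hornerZ Lpoly_eval lmono_line.
have Qe (x : C) : Q.[x] = \sum_(i < Nq) (c i k l * (k%:~R) ^+ (a i)) *
     \prod_(t < n) (((l 0 t)%:~R : C) + (s 0 t)%:~R * x) ^+ (beta i 0 t).
  by rewrite horner_sum; apply: eq_bigr => i _; rewrite hornerZ Lpoly_eval.
have /choice [df hdf] := hper.
pose dd := (\prod_(i < Nq) df i)%N.
have dd0 : (0 < dd)%N by rewrite prodn_gt0 // => i; case: (hdf i).
have cinv i m : c i k (l + s *+ (dd * m)) = c i k l.
  have : (df i %| dd)%N by rewrite /dd (bigD1 i) //= dvdn_mulr.
  move=> /dvdnP [q hq].
  have := (hdf i).2 k 0 l (s *+ (q * m)).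
  rewrite mulr0 addr0 => <-; congr (c i k (l + _)).
  by rewrite -natz scaler_nat -mulrnA hq mulnAC.
have PQ j : p k (l + s *+ (dd * j)) = Q.[(dd * j)%:R].
  by rewrite hp Qe; apply: eq_bigr => i _; rewrite cinv lmono_line.
have UQ : U = Q.
  apply/eqP; rewrite -subr_eq0; apply/negP => /negP nz.
  set rs := [seq ((dd * j)%:R : C) | j <- iota 0 (size (U - Q))].
  have H1 : all (root (U - Q)) rs.
    by apply/allP => x /mapP [j _ ->]; rewrite /root hornerD hornerN Ue PQ subrr.
  have H2 : uniq rs.
    rewrite map_inj_uniq ?iota_uniq // => x y /eqP.
    by rewrite eqr_nat eqn_pmul2l // => /eqP.
  have := max_poly_roots nz H1 H2.
  by rewrite size_map size_iota ltnn.
by move=> j; rewrite -Ue UQ Qe.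
Qed.

Lemma p_line_Pd (p : int -> Lam -> C) (Nq : nat) (c : 'I_Nq -> int -> Lam -> C)
  (a : 'I_Nq -> nat) (beta : 'I_Nq -> 'rV[nat]_n) :
  (forall i, Defs.periodic (c i)) ->
  (forall k l, p k l = \sum_(i < Nq) c i k l * (k%:~R) ^+ (a i) * lmono R (beta i) l) ->
  poly_in_lambda p ->
  forall (k : int) (l s : Lam), Pd (\max_(i < Nq) \sum_(t < n) beta i 0%R t) (fun j => p k (l + s *+ j)).
Proof.
move=> hper hp hpl k l s.
apply: Pd_ext (p_line hper hp hpl k l s) _.
apply: Pd_sum => i; apply: Pd_scale.
apply: Pd_mono (leq_bigmax (F := fun i => (\sum_(t < n) beta i 0%R t)%N) i) _.
apply: Pd_prod => t.
move: (Pd_exp (beta i 0 t) (Pd_lin ((l 0 t)%:~R : C) ((s 0 t)%:~R))).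
by rewrite mul1n.
Qed.

End Poly.

Section Misc.
Variable R : realType.
Variable n : nat.
Local Notation C := (complex R).
Local Notation nc := (@Normc.normc R).
Local Notation Lam := 'rV[int]_n.
Local Notation V := 'rV[R]_n.

Lemma latvD (a b : Lam) : latv (a + b) = latv a + latv b :> V.
Proof. by apply/rowP => t; rewrite !mxE intrD. Qed.

Lemma latvN (a : Lam) : latv (- a) = - latv a :> V.
Proof. by apply/rowP => t; rewrite !mxE intrN. Qed.

Lemma latvMn (a : Lam) j : latv (a *+ j) = latv a *+ j :> V.
Proof. by apply/rowP => t; rewrite mulmxnE !mxE mulmxnE -[a 0 t *+ j]mulr_natr intrM natz -pmulrn mulr_natr. Qed.

Lemma latvE (a : Lam) t : (latv a : V) 0 t = (a 0 t)%:~R.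
Proof. by rewrite mxE. Qed.

Lemma norm_entry (x : V) t : `|x 0 t| <= `|x|.
Proof.
rewrite [X in _ <= X]mx_normrE.
exact: (le_bigmax 0 (fun ij : 'I_1 * 'I_n => `|x ij.1 ij.2|) (0, t)).
Qed.

Lemma cone_ind_shift (P L0 : set V) sigma k (l s : Lam) :
  lin_subspace L0 -> (forall v l, P v -> L0 l -> P (v + l)) -> L0 (latv s) ->
  cone_ind P sigma k (l + s) = cone_ind P sigma k l.
Proof.
move=> [_ [_ LZ]] hP Ls; rewrite /cone_ind.
congr (if _ then _ else _); apply: asbool_equiv_eq; split.
  move=> [t [v [t0 [Pv [kt E]]]]].
  exists t, (v + (- t^-1) *: latv s); split => //; split; first by apply: hP => //; apply: LZ.
  split => //.
  move: E; rewrite latvD => /(congr1 (fun x => x - latv s)).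
  rewrite addrK => ->.
  rewrite scalerDr scalerA mulrN divff ?gt_eqF // scaleN1r.
  by rewrite addrAC.
move=> [t [v [t0 [Pv [kt E]]]]].
exists t, (v + t^-1 *: latv s); split => //; split; first by apply: hP => //; apply: LZ.
split => //.
rewrite latvD E scalerDr scalerA divff ?gt_eqF // scale1r.
by rewrite addrAC.
Qed.

Lemma cone_ind_line (P L0 : set V) sigma k (l s : Lam) j :
  lin_subspace L0 -> (forall v l, P v -> L0 l -> P (v + l)) -> L0 (latv s) ->
  cone_ind P sigma k (l + s *+ j) = cone_ind P sigma k l.
Proof.
move=> hL hP Ls; elim: j => [|j ih]; first by rewrite mulr0n addr0.
by rewrite mulrSr addrA (cone_ind_shift _ _ _ hL hP Ls).
Qed.

Lemma nc_cone_ind (P : set V) sigma k l : nc (cone_ind P sigma k l) <= 1.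
Proof. by rewrite /cone_ind; case: ifP; rewrite ?nc1 ?nc0 // ler01. Qed.

Lemma supp_bound (phi : V -> R) : test_function phi ->
  exists R1 : nat, forall x, phi x != 0 -> forall t, `|x 0 t| <= R1%:R.
Proof.
move=> [hc [hd hK]].
set K := closure [set y | phi y != 0].
have [Kn|Ke] := pselect (K !=set0); last first.
  exists 0%N => x nz; exfalso; apply: Ke; exists x; exact: subset_closure.
have cf : {within K, continuous (fun x : V => `|x|)}.
  by apply: continuous_subspaceT => x; exact: norm_continuous.
have [c Kc hmax] := compact_EVT_max Kn hK cf.
exists (Num.Def.archi_bound `|c|) => x nz t.
apply: le_trans (norm_entry x t) _.
apply: le_trans (ltW (archi_boundP (normr_ge0 c))).
by apply: hmax; apply: mem_set; exact: subset_closure.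
Qed.

Lemma p_bound (p : int -> Lam -> C) : quasi_poly p ->
  exists (B : R) (A D : nat), 0 <= B /\ forall (k : nat) (l : Lam) (K2 : R),
    (0 < k)%N -> 1 <= K2 -> (forall t, (`|l 0 t|%:~R : R) <= K2) ->
    nc (p k%:Z l) <= B * k%:R ^+ A * K2 ^+ D.
Proof.
move=> [Nq [c [a [beta [hper hp]]]]].
have /choice [Bc hBc] : forall i : 'I_Nq, exists B : R, 0 <= B /\ forall k l, nc (c i k l) <= B.
  by move=> i; apply: periodic_bound.
exists (\sum_i Bc i), (\max_(i < Nq) a i)%N, (\max_(i < Nq) \sum_(t < n) beta i 0%R t)%N.
split; first by apply: sumr_ge0 => i _; case: (hBc i).
move=> k l K2 k0 K21 hl.
rewrite hp; apply: le_trans (nc_sum _ _ _) _.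
rewrite mulr_suml mulr_suml; apply: ler_sum => i _.
rewrite !nc_mul; apply: ler_pM.
- by apply: mulr_ge0; apply: nc_ge0.
- exact: nc_ge0.
- apply: ler_pM; [exact: nc_ge0|exact: nc_ge0|by case: (hBc i)|].
  rewrite nc_exp nc_int /=; apply: ler_weXn2l; first by rewrite ler1n.
  exact: (leq_bigmax (F := a) i).
- rewrite /lmono nc_prod.
  apply: le_trans (_ : _ <= \prod_(t < n) K2 ^+ (beta i 0 t)) _.
    apply: ler_prod => t _; rewrite nc_exp nc_int exprn_ge0 ?ler0z ?normr_ge0 //=.
    apply: lerXn2r; [by rewrite nnegrE ler0z normr_ge0|
      by rewrite nnegrE (le_trans ler01 K21)|exact: hl].
  rewrite prodrXr; apply: ler_weXn2l => //.
  exact: (leq_bigmax (F := fun i => (\sum_(t < n) beta i 0%R t)%N) i).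
Qed.

End Misc.

Ltac pos := repeat first [ assumption | exact: ler0n | exact: ler01 | apply: mulr_ge0 | apply: exprn_ge0 | rewrite invr_ge0 | (apply: ltW; assumption)].

Section Fin.
Variable R : realType.
Local Notation C := (complex R).

Lemma Cof0 : Cof (0 : R) = 0.
Proof. by apply/eqP; rewrite eq_complex /= !eqxx. Qed.

Lemma difn_Cof (F : R -> R) (e : R) i j :
  difn i (fun j => Cof (F (j%:R * e))) j = Cof (rdifn i e F (j%:R * e)).
Proof.
elim: i j => [|i ih] j //=.
rewrite /dif !ih -Cof_sub /rdif.
by rewrite mulrSr mulrDl mul1r.
Qed.

Lemma arith1 (kk W Bp Bf K1 K2 : R) (n A D N M : nat) :
  1 <= kk -> 0 <= W -> 0 <= Bp -> 0 <= Bf -> 0 <= K1 -> K1 <= 3 * kk * W ->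
  0 <= K2 -> K2 <= kk * W -> M = (n + A + 2 * D + N + 1)%N ->
  K1 ^+ n * (2 ^+ M * (2 ^+ M * (Bp * kk ^+ A * K2 ^+ D)) * Bf * (kk^-1) ^+ (M - D))
  <= ((3 * W) ^+ n * 4 ^+ M * Bp * W ^+ D * Bf) * kk ^- (N + 1).
Proof.
move=> kk1 W0 Bp0 Bf0 K10 K1b K20 K2b hM.
have kk0 : 0 < kk by apply: lt_le_trans kk1; rewrite ltr01.
have e1 : (M - D = (n + A + D) + (N + 1))%N by rewrite hM; lia.
apply: le_trans (_ : _ <= (3 * kk * W) ^+ n * (2 ^+ M * (2 ^+ M * (Bp * kk ^+ A * (kk * W) ^+ D)) * Bf * (kk^-1) ^+ (M - D))) _.
  apply: ler_pM.
  - by pos.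
  - by pos.
  - by apply: lerXn2r; rewrite ?nnegrE //; pos.
  apply: ler_wpM2r; first by pos.
  apply: ler_wpM2r; first by pos.
  apply: ler_wpM2l; first by pos.
  apply: ler_wpM2l; first by pos.
  apply: ler_wpM2l; first by pos.
  by apply: lerXn2r; rewrite ?nnegrE //; pos.
rewrite e1 !exprMn exprVn !exprD invfM.
have n0 : kk ^+ n != 0 by rewrite expf_neq0 // gt_eqF.
have a0 : kk ^+ A != 0 by rewrite expf_neq0 // gt_eqF.
have d0 : kk ^+ D != 0 by rewrite expf_neq0 // gt_eqF.
have nn0 : kk ^+ (N + 1) != 0 by rewrite expf_neq0 // gt_eqF.
have -> : (4 : R) ^+ M = 2 ^+ M * 2 ^+ M by rewrite -exprMn; congr (_ ^+ _); ring.
rewrite le_eqVlt; apply/orP; left; apply/eqP.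
rewrite !invfM.
field.
by rewrite n0 a0 d0 gt_eqF // expf_neq0 // gt_eqF.
Qed.

Lemma fin_step (C0 e c a kk : R) : 0 <= a -> 0 < kk -> C0 <= e * c * kk ->
  C0 * (a * kk^-1) <= e * a * c.
Proof.
move=> a0 kk0 h; rewrite mulrCA [e * a]mulrC -mulrA; apply: ler_wpM2l => //.
by rewrite ler_pdivrMr.
Qed.

End Fin.

Lemma nat_ineq1 k R1 M S1 : (0 < k)%N -> ((k*R1 + M*S1).*2.+1 <= 3 * k * (R1 + 2*M*S1 + 1))%N.
Proof. move=> k0. nia. Qed.
Lemma nat_ineq2 k R1 M S1 : (0 < k)%N -> ((k*R1 + M*S1 + M*S1).+1 <= k * (R1 + 2*M*S1 + 1))%N.
Proof. move=> k0. nia. Qed.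
Lemma int_ineq (z : int) (S1 j M : nat) : 0 <= z -> z <= S1%:Z -> (j <= M)%N -> z *+ j <= (M * S1)%:Z.
Proof. move=> h1 h2 h3; rewrite -mulr_natr natz. nia. Qed.

Unset Implicit Arguments.

Theorem proposition4p2 (R : realType) (n : nat)
  (P : set 'rV[R]_n) (L0 : set 'rV[R]_n) (sigma : 'rV[rat]_n)
  (p : int -> 'rV[int]_n -> complex R) (g : 'rV[int]_n -> complex R) :
  rational_polyhedron P ->
  rational_subspace L0 ->
  (forall v l, P v -> L0 l -> P (v + l)) ->
  quasi_poly p -> poly_in_lambda p ->
  fin_order_char g ->
  (exists l mu : 'rV[int]_n, L0 (latv l) /\ L0 (latv mu) /\ g l != g mu) ->
  asymp_zero (fun k l => g l * p k l * cone_ind P sigma k l).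
Proof.
move=> _ [hlin _] hPinv hqp hpl [gM [gN _]] [l1 [mu1 [L1 [L2 gne]]]].
move: (hlin) => [L00 [LD LZ]].
pose s := l1 - mu1.
have Ls : L0 (latv s).
  rewrite /s latvD latvN -scaleN1r; apply: LD => //; exact: LZ.
have g0 : g 0 = 1.
  have h := gM 0 0; rewrite addr0 in h.
  have nz : g 0 != 0 by rewrite -nc_eq0 gN oner_neq0.
  by apply: (mulfI nz); rewrite mulr1 -h.
have gs1 : g s != 1.
  apply: contraNneq gne => hs1.
  by rewrite -[l1](subrK mu1) gM -/s hs1 mul1r.
have cs0 : g (- s) - 1 != 0.
  rewrite subr_eq0; apply: contraNneq gs1 => h.
  by have := gM (- s) s; rewrite addNr g0 h mul1r => <-.
set cc := Normc.normc (g (- s) - 1).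
have ncs : 0 < cc by rewrite lt0r nc_eq0 cs0 nc_ge0.
move=> phi tf N eps eps0.
have [R1 hR1] := supp_bound tf.
have [Bp [A [Dp [Bp0 hBp]]]] := p_bound hqp.
move: (hqp) => [Nq [c [a [beta [hper hp]]]]].
set Dq := (\max_(i < Nq) \sum_(t < n) beta i 0%R t)%N.
set D := (Dp + Dq)%N.
have hPd k l : Pd D (fun j => p k (l + s *+ j)).
  apply: Pd_mono (p_line_Pd hper hp hpl k l s); exact: leq_addl.
set M := (n + A + 2 * D + N + 1)%N.
set S1 := (\max_(t < n) absz (s 0%R t))%N.
have hS1 t : `|s 0 t| <= S1%:Z.
  by rewrite -abszE lez_nat; exact: (leq_bigmax (F := fun t => absz (s 0%R t)) t).
have [Bf [Bf0 hBf]] := test_diff_bound (latv s) M tf.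
set W := (R1 + 2 * M * S1 + 1)%N.
set Cst := ((3 * W%:R) ^+ n * 4 ^+ M * Bp * W%:R ^+ D * Bf) : R.
have Cst0 : 0 <= Cst.
  by rewrite /Cst; pos.
set X := Cst / (eps * cc ^+ M).
have X0 : 0 <= X by rewrite /X; apply: divr_ge0 => //; pos.
exists (Num.Def.archi_bound X).+1.
move=> k hk.
have k0 : (0 < k)%N by apply: leq_trans hk.
set kk := (k%:R : R).
have kk1 : 1 <= kk by rewrite ler1n.
have kk0 : 0 < kk by rewrite ltr0n.
pose F := fun l : 'rV[int]_n => p k%:Z l * cone_ind P sigma k%:Z l * Cof (phi (kk^-1 *: latv l)).
have ThE : Theta_pair (fun k l => g l * p k l * cone_ind P sigma k l) k phi =
    \sum_(l \in [set: 'rV[int]_n]) g l * F l.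
  by rewrite /Theta_pair; apply: eq_fsbigr => l _; rewrite /F !mulrA.
have Fsupp l : F l != 0 -> forall t, `|l 0 t| <= (k * R1)%:Z.
  move=> nz t.
  have : phi (kk^-1 *: latv l) != 0.
    by apply: contraNneq nz => h; rewrite /F h Cof0 mulr0 eqxx.
  move=> /hR1 /(_ t); rewrite !mxE normrM ger0_norm ?invr_ge0 ?ler0n //.
  by rewrite ler_pdivrMl // -intr_norm /kk -natrM pmulrn ler_int.

have finF : finite_set (supp F).
  apply: (sub_finite_set (B := [set l | inbox (k * R1) l])); last exact: inbox_finite.
  by move=> l /Fsupp.
have hid := fsum_DLn gM s M finF.
set K := (k * R1 + M * S1)%N.
set K2n := (K + M * S1).+1.
set K2 := (K2n%:R : R).
have K21 : 1 <= K2 by rewrite ler1n.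
set Bl := 2 ^+ M * (2 ^+ M * (Bp * kk ^+ A * K2 ^+ D)) * Bf * (kk^-1) ^+ (M - D).
have Bl0 : 0 <= Bl by rewrite /Bl; pos.
have sj t j : (j <= M)%N -> `|s 0 t| *+ j <= (M * S1)%:Z.
  by move=> jM; apply: int_ineq => //; exact: normr_ge0.
have box_out l : ~ inbox K l -> g l * DLn M s F l = 0.
  move=> nb; apply/eqP; rewrite mulf_eq0; apply/orP; right; apply/eqP.
  apply: contra_notP nb => /eqP nz t.
  have [j jM hj] := DLn_supp nz.
  have h := Fsupp _ hj t.
  move: h; rewrite mxE mulmxnE => h.
  have e : l 0 t = (l 0 t + s 0 t *+ j) - s 0 t *+ j by rewrite addrK.
  rewrite e; apply: le_trans (ler_normB _ _) _.
  rewrite normrMn /K PoszD.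
  by apply: lerD => //; apply: sj.
have inb l : inbox K l -> Normc.normc (g l * DLn M s F l) <= Bl.
  move=> hl.
  rewrite nc_mul gN mul1r.
  have -> : DLn M s F l = DLn M s F (l + s *+ 0) by rewrite mulr0n addr0.
  rewrite DLn_line.
  set x0 := kk^-1 *: latv l.
  rewrite (@difn_ext _ _ _ (fun j => cone_ind P sigma k%:Z l * (p k%:Z (l + s *+ j) * Cof (phi (x0 + (j%:R * kk^-1) *: latv s))))); last first.
    move=> j; rewrite /F (cone_ind_line _ _ _ _ hlin hPinv Ls) /=.
    rewrite /x0 latvD latvMn scalerDr -scalerMnr scalerMnl -mulr_natl.
    by rewrite mulrAC mulrC.
  rewrite difn_scale nc_mul.
  apply: le_trans (ler_piMl (nc_ge0 _) (nc_cone_ind _ _ _ _)) _.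
  have hwin j : (j <= M)%N -> Normc.normc (p k%:Z (l + s *+ j)) <= Bp * kk ^+ A * K2 ^+ D.
    move=> jM; apply: le_trans (hBp k (l + s *+ j) K2 k0 K21 _) _.
      move=> t; rewrite mxE mulmxnE /K2 -[K2n%:R]/((K2n%:Z)%:~R) ler_int.
      apply: le_trans (ler_normD _ _) _; rewrite normrMn.
      apply: le_trans (lerD (hl t) (sj t j jM)) _.
      by rewrite -PoszD lez_nat /K2n leqnSn.
    apply: ler_wpM2l; first by pos.
    by apply: ler_weXn2l => //; apply: leq_addr.
  apply: (@difn_bound R M D M (2 ^+ M * (Bp * kk ^+ A * K2 ^+ D)) Bf (kk^-1)
     (fun j => p k%:Z (l + s *+ j)) (fun j => Cof (phi (x0 + (j%:R * kk^-1) *: latv s)))).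
  - by pos.
  - exact: Bf0.
  - by rewrite invr_ge0 ltW.
  - by rewrite invf_le1.
  - by move=> i j _ hDi; have := Pd_high (hPd k%:Z l) j hDi.
  - move=> i j hij; apply: le_trans (difn_window hwin hij) _.
    apply: ler_wpM2r; first by pos.
    by apply: ler_weXn2l; [rewrite ler1n|apply: leq_trans hij; apply: leq_addr].
  - move=> i j hij.
    have := difn_Cof (fun t => phi (x0 + t *: latv s)) kk^-1 i j; rewrite /= => ->.
    rewrite nc_Cof [Bf * _]mulrC; apply: hBf; last by rewrite invr_ge0 ltW.
    by apply: leq_trans hij; apply: leq_addr.
  - by rewrite addn0.
have main : Normc.normc (\sum_(l \in [set: 'rV[int]_n]) g l * F l) * cc ^+ M <=
    (K.*2.+1 ^ n)%:R * Bl.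
  rewrite /cc mulrC -nc_exp -nc_mul -hid.
  apply: fsum_box_bound => // l.
  case: (pselect (inbox K l)) => hl; first exact: inb.
  by rewrite box_out // nc0.
have ar := @arith1 R kk W%:R Bp Bf (K.*2.+1)%:R K2 n A D N M kk1 (ler0n _ _) Bp0 Bf0 (ler0n _ _).
have ar2 := ar _ (ler0n _ _).
rewrite ThE.
have ccM : 0 < cc ^+ M by apply: exprn_gt0.
rewrite -(ler_pM2r ccM).
apply: le_trans main _.
rewrite natrX.
apply: le_trans (ar2 _ _ _) _.
- by rewrite /kk -!natrM ler_nat /K /W; apply: nat_ineq1.
- by rewrite /kk /K2 -!natrM ler_nat /K2n /K /W; apply: nat_ineq2.
- by [].
have hX : X < kk.
  apply: lt_le_trans (archi_boundP X0) _; rewrite /kk ler_nat; exact: ltnW.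
have hC : Cst <= eps * cc ^+ M * kk.
  move: hX; rewrite /X ltr_pdivrMr ?mulr_gt0 ?exprn_gt0 // => h.
  by rewrite mulrC; exact: ltW.
rewrite exprD expr1 invfM.
by apply: fin_step => //; pos.
Qed.
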